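(* Let $f_r(w,u)(x)=\sum_{l=1}^{n_1}w_{r,l}\big(\sum_{m=1}^d u_{lm}x_m\big)^{\alpha_l}$ with $\alpha\in\mathbb{R}^{n_1}$, $\alpha_l\ge1$, and let $\rho_x=\max_{i\in[n]}\|x^i\|_{p_u'}$. Then for every $x\in\{x^1,\dots,x^n\}$, every $(w,u)\in B_{++}$, all $r,s,q\in[K]$, $t,b'\in[n_1]$, $a'\in[n_1]$, $b''\in[d]$: $$\sum_{t}w_{s,t}\frac{\partial f_r(x)}{\partial w_{s,t}}\le C_w:=\rho_w\Psi^\alpha_{p_w',p_u}(\mathbf{1},\rho_u\rho_x),\qquad \sum_{a,b}u_{ab}\frac{\partial f_r(x)}{\partial u_{ab}}\le C_u:=\rho_w\Psi^\alpha_{p_w',p_u}(\alpha,\rho_u\rho_x),$$ $$\sum_t w_{s,t}\frac{\partial^2 f_r(x)}{\partial w_{s,t}\partial w_{q,b'}}=0,\qquad \sum_{a,b}u_{ab}\frac{\partial^2 f_r(x)}{\partial u_{ab}\partial w_{q,b'}}\le\|\alpha\|_\infty\frac{\partial f_r(x)}{\partial w_{q,b'}},$$ $$\sum_t w_{s,t}\frac{\partial^2 f_r(x)}{\partial w_{s,t}\partial u_{a'b''}}\le\frac{\partial f_r(x)}{\partial u_{a'b''}},\qquad \sum_{a,b}u_{ab}\frac{\partial^2 f_r(x)}{\partial u_{ab}\partial u_{a'b''}}\le(\|\alpha\|_\infty-1)\frac{\partial f_r(x)}{\partial u_{a'b''}}.$$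
   Context: Data $x^i\in\mathbb{R}^d_+$, $i\in[n]$. $w\in\mathbb{R}^{K\times n_1}$ with rows $w_1,\dots,w_K$, $u\in\mathbb{R}^{n_1\times d}$. Given $p_w,p_u\in(1,\infty)$, $\rho_w,\rho_u>0$, $B_{++}=\{(w,u)\in\mathbb{R}^{K\times n_1}_{++}\times\mathbb{R}^{n_1\times d}_{++}:\|u\|_{p_u}\le\rho_u,\ \|w_i\|_{p_w}\le\rho_w\ \forall i\}$ (entrywise norms); $p'=p/(p-1)$. $\mathbf{1}$ is the all-ones vector in $\mathbb{R}^{n_1}$. For $p,q\ge1$ and $\alpha\in\mathbb{R}^{n_1}_{++}$, $$\Psi^{\alpha}_{p,q}(\delta,t)=\Big(\Big[\sum_{l\in J}(\delta_l t^{\alpha_l})^{\frac{pq}{q-\bar\alpha p}}\Big]^{1-\frac{\bar\alpha p}{q}}+\max_{j\in J^c}(\delta_j t^{\alpha_j})^p\Big)^{1/p},\quad \delta\in\mathbb{R}^{n_1}_{++},\ t>0,$$ with $J=\{l:\alpha_lp<q\}$, $J^c=\{l:\alpha_lp\ge q\}$, $\bar\alpha=\min_{l\in J}\alpha_l$, empty sums/maxima equal to $0$. *)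

(* Defs.v *)
From Stdlib Require Import Reals Lra Lia Classical ClassicalEpsilon.
Open Scope R_scope.

(* Matrices are functions nat -> nat -> R; only indices in range matter. *)
Definition mat := nat -> nat -> R.

Fixpoint sumR (n : nat) (f : nat -> R) : R :=
  match n with O => 0 | S k => sumR k f + f k end.

(* maxR n f = max(0, f 0, ..., f (n-1)); used only for nonnegative families,
   so it is the maximum, with empty max = 0. *)
Fixpoint maxR (n : nat) (f : nat -> R) : R :=
  match n with O => 0 | S k => Rmax (maxR k f) (f k) end.

(* real power x^a for x >= 0 and a > 0 (0^a = 0) *)
Definition rpow (x a : R) : R := if Rlt_dec 0 x then Rpower x a else 0.

Definition conj (p : R) : R := p / (p - 1).

Definition lpnorm_mat (p : R) (m k : nat) (A : mat) : R :=
  rpow (sumR m (fun a => sumR k (fun b => rpow (Rabs (A a b)) p))) (1 / p).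

Definition lpnorm_vec (p : R) (k : nat) (v : nat -> R) : R :=
  rpow (sumR k (fun b => rpow (Rabs (v b)) p)) (1 / p).

Definition linf (k : nat) (v : nat -> R) : R := maxR k (fun l => Rabs (v l)).

Fixpoint minJ (alpha : nat -> R) (p q : R) (n : nat) : option R :=
  match n with
  | O => None
  | S k =>
    let rest := minJ alpha p q k in
    if Rlt_dec (alpha k * p) q then
      match rest with None => Some (alpha k) | Some a => Some (Rmin a (alpha k)) end
    else rest
  end.

Definition alphabar (alpha : nat -> R) (p q : R) (n : nat) : R :=
  match minJ alpha p q n with Some a => a | None => 0 end.

Definition Psi (n1 : nat) (alpha delta : nat -> R) (p q t : R) : R :=
  let ab := alphabar alpha p q n1 in
  let term1 :=
    rpow (sumR n1 (fun l => if Rlt_dec (alpha l * p) q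
                            then rpow (delta l * rpow t (alpha l)) (p * q / (q - ab * p))
                            else 0))
         (1 - ab * p / q) in
  let term2 :=
    maxR n1 (fun l => if Rlt_dec (alpha l * p) q then 0
                      else rpow (delta l * rpow t (alpha l)) p) in
  rpow (term1 + term2) (1 / p).

Definition fnet (n1 d : nat) (alpha : nat -> R) (x : nat -> R) (r : nat)
  (w u : mat) : R :=
  sumR n1 (fun l => w r l * rpow (sumR d (fun m => u l m * x m)) (alpha l)).

Definition upd (M : mat) (i j : nat) (h : R) : mat :=
  fun a b => if andb (Nat.eqb a i) (Nat.eqb b j) then h else M a b.

Definition pdw (s t : nat) (g : mat -> mat -> R) : mat -> mat -> R :=
  fun w u => epsilon (inhabits 0)
    (fun D => derivable_pt_lim (fun h => g (upd w s t h) u) (w s t) D).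

Definition pdu (a b : nat) (g : mat -> mat -> R) : mat -> mat -> R :=
  fun w u => epsilon (inhabits 0)
    (fun D => derivable_pt_lim (fun h => g w (upd u a b h)) (u a b) D).

Definition Bpp (K n1 d : nat) (pw pu rhow rhou : R) (w u : mat) : Prop :=
  (forall r l, (r < K)%nat -> (l < n1)%nat -> 0 < w r l) /\
  (forall l m, (l < n1)%nat -> (m < d)%nat -> 0 < u l m) /\
  lpnorm_mat pu n1 d u <= rhou /\
  (forall i, (i < K)%nat -> lpnorm_vec pw n1 (w i) <= rhow).

(* Main.v *)
Require Import Defs.
From Stdlib Require Import Reals Lra Lia ClassicalEpsilon.
Open Scope R_scope.
Open Scope bool_scope.

Lemma exp_le_mono x y : x <= y -> exp x <= exp y.
Proof. intros [H|H]; [left; apply exp_increasing; auto| subst; lra]. Qed.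

Lemma rpow_pos_eq x a : 0 < x -> rpow x a = Rpower x a.
Proof. intros; unfold rpow; destruct (Rlt_dec 0 x); [auto|lra]. Qed.
Lemma rpow_npos x a : x <= 0 -> rpow x a = 0.
Proof. intros; unfold rpow; destruct (Rlt_dec 0 x); [lra|auto]. Qed.
Lemma rpow_0 a : rpow 0 a = 0.
Proof. apply rpow_npos; lra. Qed.
Lemma rpow_ge0 x a : 0 <= rpow x a.
Proof. unfold rpow; destruct (Rlt_dec 0 x); [unfold Rpower; left; apply exp_pos|lra]. Qed.
Lemma rpow_gt0 x a : 0 < x -> 0 < rpow x a.
Proof. intros; rewrite rpow_pos_eq by auto; unfold Rpower; apply exp_pos. Qed.

Lemma rpow_mul x y a : 0 <= x -> 0 <= y -> rpow (x*y) a = rpow x a * rpow y a.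
Proof. intros Hx Hy. destruct Hx as [Hx|Hx]; [|subst; rewrite Rmult_0_l, !rpow_0; lra].
destruct Hy as [Hy|Hy]; [|subst; rewrite Rmult_0_r, !rpow_0; lra].
rewrite !rpow_pos_eq by (try apply Rmult_lt_0_compat; auto).
symmetry; apply Rpower_mult_distr; auto. Qed.

Lemma rpow_rpow x a b : 0 <= x -> rpow (rpow x a) b = rpow x (a*b).
Proof. intros [Hx|Hx]; [|subst; rewrite !rpow_0; auto].
rewrite (rpow_pos_eq x a) by auto. rewrite rpow_pos_eq by (unfold Rpower; apply exp_pos).
rewrite rpow_pos_eq by auto. apply Rpower_mult. Qed.

Lemma rpow_plus x a b : 0 <= x -> rpow x (a+b) = rpow x a * rpow x b.
Proof. intros [Hx|Hx]; [|subst; rewrite !rpow_0; lra].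
rewrite !rpow_pos_eq by auto; apply Rpower_plus. Qed.

Lemma rpow_1 x : 0 <= x -> rpow x 1 = x.
Proof. intros [Hx|Hx]; [|subst; rewrite !rpow_0; lra].
rewrite !rpow_pos_eq by auto; apply Rpower_1; auto. Qed.

Lemma rpow_one a : rpow 1 a = 1.
Proof. rewrite rpow_pos_eq by lra. unfold Rpower. rewrite ln_1, Rmult_0_r, exp_0; auto. Qed.

Lemma rpow_inv y c : 0 < y -> rpow (/y) c = / rpow y c.
Proof. intros. rewrite !rpow_pos_eq by (auto; apply Rinv_0_lt_compat; auto).
unfold Rpower. rewrite ln_Rinv by auto. rewrite <- exp_Ropp. f_equal; ring. Qed.

Lemma rpow_le x y a : 0 <= x <= y -> 0 < a -> rpow x a <= rpow y a.
Proof. intros [[Hx|Hx] Hxy] Ha; [|subst; rewrite rpow_0; apply rpow_ge0].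
rewrite !rpow_pos_eq by lra. apply Rle_Rpower_l; lra. Qed.

Lemma rpow_le_exp y a b : 0 <= y <= 1 -> a <= b -> rpow y b <= rpow y a.
Proof. intros [[Hy|Hy] Hy1] Hab; [|subst; rewrite !rpow_0; lra].
rewrite !rpow_pos_eq by lra. unfold Rpower. apply exp_le_mono.
assert (ln y <= 0). { destruct Hy1 as [Hy1|Hy1]. left; rewrite <- ln_1; apply ln_increasing; lra.
 subst; rewrite ln_1; lra. }
nra. Qed.

Lemma rpow_inj_le x y a : 0 <= x -> 0 <= y -> 0 < a -> rpow x a <= rpow y a -> x <= y.
Proof. intros Hx Hy Ha H. destruct (Rle_dec x y) as [|Hn]; auto. exfalso.
assert (rpow y a < rpow x a).
{ destruct Hy as [Hy|Hy]. rewrite !rpow_pos_eq by lra. apply Rlt_Rpower_l; lra.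
  subst. rewrite rpow_0. apply rpow_gt0; lra. } lra. Qed.

Lemma rpow_pow_inv x a : 0 <= x -> a <> 0 -> rpow (rpow x a) (1/a) = x.
Proof. intros. rewrite rpow_rpow by auto. replace (a * (1/a)) with 1 by (field; auto).
apply rpow_1; auto. Qed.

Lemma wamgm X Y t : 0 <= X -> 0 <= Y -> 0 < t < 1 ->
  rpow X t * rpow Y (1-t) <= t*X + (1-t)*Y.
Proof. intros [HX|HX] [HY|HY] Ht;
 try (subst; rewrite ?rpow_0; nra).
set (M := t*X + (1-t)*Y). assert (HM : 0 < M) by (unfold M; nra).
rewrite !rpow_pos_eq by auto. unfold Rpower. rewrite <- exp_plus.
rewrite <- (exp_ln M) by auto. apply exp_le_mono.
assert (H1 := exp_ineq1_le (ln (X/M))). assert (H2 := exp_ineq1_le (ln (Y/M))).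
rewrite exp_ln in H1 by (apply Rdiv_lt_0_compat; auto).
rewrite exp_ln in H2 by (apply Rdiv_lt_0_compat; auto).
unfold Rdiv in *. rewrite ln_mult, ln_Rinv in H1, H2 by (auto; apply Rinv_0_lt_compat; auto).
assert (t*(X*/M) + (1-t)*(Y*/M) = 1). { unfold M in *. field. lra. }
assert (t * (1 + (ln X + - ln M)) <= t * (X * / M)) by (apply Rmult_le_compat_l; lra).
assert ((1-t) * (1 + (ln Y + - ln M)) <= (1-t) * (Y * / M)) by (apply Rmult_le_compat_l; lra).
lra. Qed.

Lemma sumR_ext n F G : (forall l, (l < n)%nat -> F l = G l) -> sumR n F = sumR n G.
Proof. induction n; simpl; intros H; auto. rewrite IHn by (intros; apply H; lia). rewrite H by lia; auto. Qed.
Lemma sumR_le n F G : (forall l, (l < n)%nat -> F l <= G l) -> sumR n F <= sumR n G.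
Proof. induction n; simpl; intros H; [lra|]. assert (F n <= G n) by (apply H; lia).
assert (sumR n F <= sumR n G) by (apply IHn; intros; apply H; lia). lra. Qed.
Lemma sumR_plus n F G : sumR n (fun l => F l + G l) = sumR n F + sumR n G.
Proof. induction n; simpl; [lra|rewrite IHn; lra]. Qed.
Lemma sumR_scal n c F : sumR n (fun l => c * F l) = c * sumR n F.
Proof. induction n; simpl; [lra|rewrite IHn; lra]. Qed.
Lemma sumR_0 n : sumR n (fun _ => 0) = 0.
Proof. induction n; simpl; [lra|rewrite IHn; lra]. Qed.
Lemma sumR_ge0 n F : (forall l, (l<n)%nat -> 0 <= F l) -> 0 <= sumR n F.
Proof. intros; rewrite <- (sumR_0 n); apply sumR_le; auto. Qed.
Lemma sumR_delta n t g : sumR n (fun l => if Nat.eqb l t then g l else 0) = if Nat.ltb t n then g t else 0.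
Proof. induction n; simpl; auto. rewrite IHn.
destruct (Nat.eqb_spec n t); destruct (Nat.ltb_spec t n); destruct (Nat.ltb_spec t (S n)); subst; try lia; lra. Qed.
Lemma sumR_ge_term n F l : (forall k, (k<n)%nat -> 0 <= F k) -> (l < n)%nat -> F l <= sumR n F.
Proof. induction n; simpl; intros H Hl; [lia|]. destruct (Nat.eq_dec l n).
 subst. assert (0 <= sumR n F) by (apply sumR_ge0; intros; apply H; lia). lra.
 assert (F l <= sumR n F) by (apply IHn; [intros; apply H; lia|lia]). assert (0 <= F n) by (apply H; lia). lra. Qed.
Lemma sumR_zero_all n F : (forall k, (k<n)%nat -> 0 <= F k) -> sumR n F = 0 -> forall l, (l<n)%nat -> F l = 0.
Proof. intros H H0 l Hl. assert (F l <= sumR n F) by (apply sumR_ge_term; auto). assert (0 <= F l) by auto. lra. Qed.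

Lemma maxR_ge0 n f : 0 <= maxR n f.
Proof. induction n; simpl; [lra|]. eapply Rle_trans; [eauto|apply Rmax_l]. Qed.
Lemma maxR_ge n f l : (l < n)%nat -> f l <= maxR n f.
Proof. induction n; simpl; intros; [lia|]. destruct (Nat.eq_dec l n). subst; apply Rmax_r.
eapply Rle_trans; [apply IHn; lia|apply Rmax_l]. Qed.

Lemma conj_gt1 p : 1 < p -> 1 < conj p.
Proof. intros; unfold conj. apply (Rmult_lt_reg_r (p-1)); [lra|]. unfold Rdiv. rewrite Rmult_assoc, Rinv_l by lra. lra. Qed.
Lemma conj_inv p : 1 < p -> 1/p + 1/conj p = 1.
Proof. intros; unfold conj. field. lra. Qed.

Lemma holder n a b p : 1 < p -> (forall l, (l<n)%nat -> 0 <= a l) -> (forall l, (l<n)%nat -> 0 <= b l) ->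
  sumR n (fun l => a l * b l) <=
  rpow (sumR n (fun l => rpow (a l) p)) (1/p) * rpow (sumR n (fun l => rpow (b l) (conj p))) (1/conj p).
Proof. intros Hp Ha Hb. set (q := conj p). assert (Hq : 1 < q) by (apply conj_gt1; auto).
assert (Hpq : 1/p + 1/q = 1) by (apply conj_inv; auto).
set (A := sumR n (fun l => rpow (a l) p)). set (B := sumR n (fun l => rpow (b l) q)).
assert (HA : 0 <= A) by (apply sumR_ge0; intros; apply rpow_ge0).
assert (HB : 0 <= B) by (apply sumR_ge0; intros; apply rpow_ge0).
assert (HR : 0 <= rpow A (1/p) * rpow B (1/q)) by (apply Rmult_le_pos; apply rpow_ge0).
destruct HA as [HA|HA].
2:{ assert (Z : forall l, (l<n)%nat -> a l = 0).
  { intros l Hl. assert (rpow (a l) p = 0) by (apply (sumR_zero_all n (fun l => rpow (a l) p)); auto; intros; apply rpow_ge0).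
    destruct (Ha l Hl) as [H'|H']; auto. assert (0 < rpow (a l) p) by (apply rpow_gt0; auto). lra. }
  rewrite (sumR_ext n _ (fun _ => 0)) by (intros l Hl; rewrite Z by auto; ring). rewrite sumR_0; auto. }
destruct HB as [HB|HB].
2:{ assert (Z : forall l, (l<n)%nat -> b l = 0).
  { intros l Hl. assert (rpow (b l) q = 0) by (apply (sumR_zero_all n (fun l => rpow (b l) q)); auto; intros; apply rpow_ge0).
    destruct (Hb l Hl) as [H'|H']; auto. assert (0 < rpow (b l) q) by (apply rpow_gt0; auto). lra. }
  rewrite (sumR_ext n _ (fun _ => 0)) by (intros l Hl; rewrite Z by auto; ring). rewrite sumR_0; auto. }
set (A' := rpow A (1/p)). set (B' := rpow B (1/q)).
assert (HA' : 0 < A') by (apply rpow_gt0; auto). assert (HB' : 0 < B') by (apply rpow_gt0; auto).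
assert (Hp1 : 0 < 1/p < 1) by (split; [apply Rdiv_lt_0_compat; lra| assert (0 < 1/q) by (apply Rdiv_lt_0_compat; lra); lra]).
apply Rle_trans with (sumR n (fun l => A' * B' * ((1/p) * (rpow (a l) p * /A) + (1 - 1/p) * (rpow (b l) q * /B)))).
- apply sumR_le; intros l Hl.
  assert (W := wamgm (rpow (a l) p * /A) (rpow (b l) q * /B) (1/p)).
  rewrite !rpow_mul in W by (try apply rpow_ge0; left; apply Rinv_0_lt_compat; auto).
  rewrite !rpow_inv in W by auto.
  replace (1 - 1/p) with (1/q) in * by lra.
  rewrite !rpow_pow_inv in W by (auto; lra).
  fold A' B' in W.
  assert (W' : a l * / A' * (b l * / B') <= 1/p * (rpow (a l) p * / A) + 1/q * (rpow (b l) q * / B)).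
  { apply W; try (apply Rmult_le_pos; [apply rpow_ge0| left; apply Rinv_0_lt_compat; auto]). lra. }
  apply (Rmult_le_compat_l (A'*B')) in W'; [|nra].
  replace (A' * B' * (a l * / A' * (b l * / B'))) with (a l * b l) in W' by (field; lra). lra.
- rewrite sumR_scal. rewrite sumR_plus. rewrite !sumR_scal.
  rewrite (sumR_ext n (fun l => rpow (a l) p * / A) (fun l => /A * rpow (a l) p)) by (intros; ring).
  rewrite (sumR_ext n (fun l => rpow (b l) q * / B) (fun l => /B * rpow (b l) q)) by (intros; ring).
  rewrite !sumR_scal. fold A B. rewrite !Rinv_l by lra. replace (1-1/p) with (1/q) by lra.
  fold A' B'. rewrite !Rmult_1_r, Hpq. lra.
Qed.

Lemma minJ_None alpha p q n : minJ alpha p q n = None -> forall l, (l<n)%nat -> ~ alpha l * p < q.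
Proof. induction n; simpl; intros H l Hl; [lia|].
destruct (Rlt_dec (alpha n * p) q). destruct (minJ alpha p q n); discriminate.
destruct (Nat.eq_dec l n); [subst; auto|apply IHn; auto; lia]. Qed.

Lemma minJ_Some alpha p q n m : minJ alpha p q n = Some m ->
  (forall l, (l<n)%nat -> alpha l * p < q -> m <= alpha l) /\
  exists k, (k<n)%nat /\ alpha k * p < q /\ m = alpha k.
Proof. revert m; induction n; simpl; intros m H; [discriminate|].
destruct (Rlt_dec (alpha n * p) q) as [Hn|Hn].
- destruct (minJ alpha p q n) as [m0|] eqn:E.
  + injection H; intros; subst. destruct (IHn m0 eq_refl) as [H1 [k [Hk1 [Hk2 Hk3]]]].
    split. intros l Hl Hlq. destruct (Nat.eq_dec l n). subst; apply Rmin_r.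
    eapply Rle_trans; [apply Rmin_l|apply H1; auto; lia].
    unfold Rmin; destruct (Rle_dec m0 (alpha n)). exists k; split; [lia|auto]. exists n; split; [lia|auto].
  + injection H; intros; subst. split. intros l Hl Hlq. destruct (Nat.eq_dec l n). subst; lra.
    exfalso; apply (minJ_None _ _ _ _ E l); auto; lia.
    exists n; split; [lia|auto].
- destruct (IHn m H) as [H1 [k [Hk1 [Hk2 Hk3]]]]. split.
  intros l Hl Hlq. destruct (Nat.eq_dec l n). subst; contradiction. apply H1; auto; lia.
  exists k; split; [lia|auto].
Qed.

Lemma core_bound n1 alpha c y P Q :
  (forall l, (l<n1)%nat -> 1 <= alpha l) -> 1 < P -> 1 < Q ->
  (forall l, (l<n1)%nat -> 0 <= c l) ->
  (forall l, (l<n1)%nat -> 0 <= y l <= 1) -> sumR n1 y <= 1 ->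
  sumR n1 (fun l => rpow (c l) P * rpow (y l) (alpha l * P / Q)) <=
  (let ab := alphabar alpha P Q n1 in
  rpow (sumR n1 (fun l => if Rlt_dec (alpha l * P) Q
                            then rpow (c l) (P * Q / (Q - ab * P))
                            else 0))
         (1 - ab * P / Q) +
  maxR n1 (fun l => if Rlt_dec (alpha l * P) Q then 0
                      else rpow (c l) P)).
Proof. intros Hal HP HQ Hc Hy Hs. cbv zeta.
set (F := fun l => rpow (c l) P * rpow (y l) (alpha l * P / Q)).
set (M := maxR n1 (fun l => if Rlt_dec (alpha l * P) Q then 0 else rpow (c l) P)).
rewrite (sumR_ext n1 _ (fun l => (if Rlt_dec (alpha l * P) Q then F l else 0) + (if Rlt_dec (alpha l * P) Q then 0 else F l)))
  by (intros l _; destruct (Rlt_dec (alpha l * P) Q); unfold F; lra).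
rewrite sumR_plus. apply Rplus_le_compat.
- unfold alphabar. destruct (minJ alpha P Q n1) as [m|] eqn:E.
  + destruct (minJ_Some _ _ _ _ _ E) as [Hmin [k [Hk [HkJ Hkm]]]].
    assert (Hm1 : 1 <= m) by (subst; auto).
    set (th := m * P / Q).
    assert (Hth : 0 < th < 1). { unfold th. assert (0 < m*P) by (apply Rmult_lt_0_compat; lra). split. apply Rdiv_lt_0_compat; lra.
      apply (Rmult_lt_reg_r Q); [lra|]. unfold Rdiv; rewrite Rmult_assoc, Rinv_l by lra; rewrite Hkm; lra. }
    set (ph := 1/(1-th)).
    assert (Hph : 1 < ph). { unfold ph. apply (Rmult_lt_reg_r (1-th)); [lra|]. replace (1 / (1 - th) * (1 - th)) with 1 by (field; lra). lra. }
    set (a := fun l => if Rlt_dec (alpha l * P) Q then rpow (c l) P else 0).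
    set (b := fun l => if Rlt_dec (alpha l * P) Q then rpow (y l) th else 0).
    apply Rle_trans with (sumR n1 (fun l => a l * b l)).
    { apply sumR_le; intros l Hl. unfold a, b, F. destruct (Rlt_dec (alpha l * P) Q) as [HJ|HJ]; [|lra].
      apply Rmult_le_compat_l; [apply rpow_ge0|]. apply rpow_le_exp; auto.
      unfold th. unfold Rdiv. apply Rmult_le_compat_r; [left; apply Rinv_0_lt_compat; lra|].
      apply Rmult_le_compat_r; [lra|]. apply Hmin; auto. }
    eapply Rle_trans; [apply holder; [exact Hph| |]; intros l _; unfold a, b; destruct (Rlt_dec (alpha l * P) Q); try lra; apply rpow_ge0|].
    assert (Hcj : conj ph = 1/th) by (unfold conj, ph; field; lra).
    rewrite Hcj. replace (1/(1/th)) with th by (field; lra).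
    replace (1/ph) with (1 - th) by (unfold ph; field; lra).
    rewrite (sumR_ext n1 (fun l => rpow (a l) ph) (fun l => if Rlt_dec (alpha l * P) Q then rpow (c l) (P * Q / (Q - m * P)) else 0)).
    2:{ intros l Hl. unfold a. destruct (Rlt_dec (alpha l * P) Q); [|apply rpow_0].
        rewrite rpow_rpow by auto. f_equal. unfold ph, th. field. split; [|lra].
        intro. assert (m*P < Q) by (subst; auto). lra. }
    rewrite (sumR_ext n1 (fun l => rpow (b l) (1/th)) (fun l => if Rlt_dec (alpha l * P) Q then y l else 0)).
    2:{ intros l Hl. unfold b. destruct (Rlt_dec (alpha l * P) Q); [|apply rpow_0].
        apply rpow_pow_inv; [apply Hy; auto|lra]. }
    assert (0 <= rpow (sumR n1 (fun l => if Rlt_dec (alpha l * P) Q then rpow (c l) (P * Q / (Q - m * P)) else 0)) (1 - th)) by apply rpow_ge0.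
    assert (rpow (sumR n1 (fun l => if Rlt_dec (alpha l * P) Q then y l else 0)) th <= 1).
    { rewrite <- (rpow_one th). apply rpow_le; [|lra]. split.
      apply sumR_ge0; intros l Hl; destruct (Rlt_dec (alpha l * P) Q); [apply Hy; auto|lra].
      eapply Rle_trans; [|apply Hs]. apply sumR_le; intros l Hl; destruct (Rlt_dec (alpha l * P) Q); [lra|apply Hy; auto]. }
    assert (0 <= rpow (sumR n1 (fun l => if Rlt_dec (alpha l * P) Q then y l else 0)) th) by apply rpow_ge0.
    nra.
  + rewrite (sumR_ext n1 _ (fun _ => 0)). rewrite sumR_0; apply rpow_ge0.
    intros l Hl. destruct (Rlt_dec (alpha l * P) Q); auto. exfalso; apply (minJ_None _ _ _ _ E l); auto.
- apply Rle_trans with (sumR n1 (fun l => M * y l)).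
  + apply sumR_le; intros l Hl. unfold F.
    assert (HM : 0 <= M) by apply maxR_ge0. assert (Hyl := Hy l Hl).
    destruct (Rlt_dec (alpha l * P) Q) as [HJ|HJ]; [nra|].
    assert (H1 : rpow (c l) P <= M).
    { unfold M. assert (Hg := maxR_ge n1 (fun l => if Rlt_dec (alpha l * P) Q then 0 else rpow (c l) P) l Hl).
      simpl in Hg. destruct (Rlt_dec (alpha l * P) Q); [contradiction|auto]. }
    assert (H2 : rpow (y l) (alpha l * P / Q) <= y l).
    { rewrite <- (rpow_1 (y l)) at 2 by lra. apply rpow_le_exp; auto.
      apply (Rmult_le_reg_r Q); [lra|]. unfold Rdiv; rewrite Rmult_assoc, Rinv_l; lra. }
    assert (0 <= rpow (y l) (alpha l * P / Q)) by apply rpow_ge0.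
    assert (0 <= rpow (c l) P) by apply rpow_ge0. nra.
  + rewrite sumR_scal. assert (0 <= M) by apply maxR_ge0. assert (0 <= sumR n1 y).
    { apply sumR_ge0; intros; apply Hy; auto. } nra.
Qed.

Lemma main_ineq n1 d alpha x pw pu rhow rhou rhox wr u delta :
 (forall l, (l<n1)%nat -> 1 <= alpha l) -> (forall m, (m<d)%nat -> 0 <= x m) ->
 1 < pw -> 1 < pu -> 0 < rhow -> 0 < rhou ->
 (forall l, (l<n1)%nat -> 0 < wr l) -> (forall l m, (l<n1)%nat -> (m<d)%nat -> 0 < u l m) ->
 lpnorm_mat pu n1 d u <= rhou -> lpnorm_vec pw n1 wr <= rhow ->
 lpnorm_vec (conj pu) d x <= rhox -> (forall l, (l<n1)%nat -> 0 <= delta l) ->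
 sumR n1 (fun a => wr a * (delta a * rpow (sumR d (fun m => u a m * x m)) (alpha a)))
   <= rhow * Psi n1 alpha delta (conj pw) pu (rhou * rhox).
Proof.
intros Hal Hx Hpw Hpu Hrw Hru Hw Hu Hnu Hnw Hnx Hd.
set (P := conj pw). assert (HP : 1 < P) by (apply conj_gt1; auto).
assert (Hrx : 0 <= rhox) by (eapply Rle_trans; [apply rpow_ge0|exact Hnx]).
set (S := fun a => sumR d (fun m => u a m * x m)).
set (V := fun a => sumR d (fun m => rpow (u a m) pu)).
set (Ru := rpow rhou pu). assert (HRu : 0 < Ru) by (apply rpow_gt0; auto).
set (y := fun a => V a * / Ru).
set (T := rhou * rhox). assert (HT : 0 <= T) by (unfold T; nra).
set (c := fun a => delta a * rpow T (alpha a)).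
assert (HS : forall a, (a<n1)%nat -> 0 <= S a).
{ intros a Ha; apply sumR_ge0; intros m Hm. assert (0 < u a m) by auto. assert (0 <= x m) by auto. nra. }
assert (HV : forall a, 0 <= V a) by (intros; apply sumR_ge0; intros; apply rpow_ge0).
assert (B1 : forall a, (a<n1)%nat -> S a <= rpow (V a) (1/pu) * rhox).
{ intros a Ha. unfold S. eapply Rle_trans; [apply (holder d (fun m => u a m) x pu); auto; intros m Hm; left; auto|].
  apply Rmult_le_compat_l; [apply rpow_ge0|]. eapply Rle_trans; [|exact Hnx]. unfold lpnorm_vec.
  right. f_equal. apply sumR_ext; intros m Hm. rewrite Rabs_pos_eq by auto. auto. }
assert (HsV : sumR n1 V <= Ru).
{ assert (E : lpnorm_mat pu n1 d u = rpow (sumR n1 V) (1/pu)).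
  { unfold lpnorm_mat. f_equal. apply sumR_ext; intros a Ha. unfold V. apply sumR_ext; intros m Hm.
    rewrite Rabs_pos_eq by (left; auto); auto. }
  rewrite E in Hnu. assert (0 <= sumR n1 V) by (apply sumR_ge0; auto).
  rewrite <- (rpow_pow_inv (sumR n1 V) (1/pu)) by (auto; unfold Rdiv; rewrite Rmult_1_l; apply Rinv_neq_0_compat; lra).
  replace (1/(1/pu)) with pu by (field; lra). apply rpow_le; [|lra]. split; [apply rpow_ge0|auto]. }
assert (Hy : forall a, (a<n1)%nat -> 0 <= y a <= 1).
{ intros a Ha. unfold y. split. apply Rmult_le_pos; [auto|left; apply Rinv_0_lt_compat; auto].
  apply (Rmult_le_reg_r Ru); auto. rewrite Rmult_assoc, Rinv_l, Rmult_1_r, Rmult_1_l by lra.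
  eapply Rle_trans; [|exact HsV]. apply (sumR_ge_term n1 V); auto. }
assert (Hsy : sumR n1 y <= 1).
{ unfold y. rewrite (sumR_ext n1 _ (fun a => / Ru * V a)) by (intros; ring). rewrite sumR_scal.
  apply (Rmult_le_reg_l Ru); auto. rewrite <- Rmult_assoc, Rinv_r, Rmult_1_l by lra. lra. }
assert (PT : forall a, (a<n1)%nat -> rpow (delta a * rpow (S a) (alpha a)) P <= rpow (c a) P * rpow (y a) (alpha a * P / pu)).
{ intros a Ha. unfold c. assert (Hda := Hd a Ha). assert (Hala := Hal a Ha).
  rewrite !rpow_mul by (auto; apply rpow_ge0). rewrite !rpow_rpow by auto.
  rewrite Rmult_assoc. apply Rmult_le_compat_l; [apply rpow_ge0|].
  assert (E : rpow T (alpha a * P) * rpow (y a) (alpha a * P / pu) = rpow (rhox * rpow (V a) (1/pu)) (alpha a * P)).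
  { replace (alpha a * P / pu) with ((1/pu) * (alpha a * P)) by (field; lra).
    rewrite <- (rpow_rpow (y a) (1/pu) (alpha a * P)) by (apply Hy; auto). rewrite <- rpow_mul by (auto; apply rpow_ge0).
    f_equal. unfold y. rewrite rpow_mul by (auto; left; apply Rinv_0_lt_compat; auto).
    unfold Ru. rewrite rpow_inv by (apply rpow_gt0; auto). rewrite rpow_pow_inv by lra.
    unfold T. field. lra. }
  rewrite E. apply rpow_le; [|nra]. split; [auto|]. rewrite Rmult_comm; auto. }
eapply Rle_trans; [apply (holder n1 wr (fun a => delta a * rpow (S a) (alpha a)) pw); auto;
   [intros; left; auto| intros l Hl; apply Rmult_le_pos; [auto|apply rpow_ge0]]|].
fold P. apply Rmult_le_compat; try apply rpow_ge0.
- eapply Rle_trans; [|exact Hnw]. right. unfold lpnorm_vec. f_equal. apply sumR_ext; intros l Hl.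
  rewrite Rabs_pos_eq by (left; auto); auto.
- unfold Psi. cbv zeta. apply rpow_le.
  2:{ apply Rdiv_lt_0_compat; lra. }
  split. apply sumR_ge0; intros; apply rpow_ge0.
  eapply Rle_trans; [apply sumR_le; intros a Ha; apply PT; auto|].
  apply (core_bound n1 alpha c y P pu); auto.
  intros l Hl. unfold c. apply Rmult_le_pos; [auto|apply rpow_ge0].
Qed.

Lemma eps_der g x D : derivable_pt_lim g x D ->
  epsilon (inhabits 0) (fun D => derivable_pt_lim g x D) = D.
Proof. intros H. apply (uniqueness_limite g x). apply epsilon_spec. exists D; auto. auto. Qed.

Lemma der_local f g x D : derivable_pt_lim g x D ->
  (exists del, 0 < del /\ forall h, Rabs (h - x) < del -> f h = g h) -> derivable_pt_lim f x D.
Proof. intros H [del [Hdel Heq]] eps Heps. destruct (H eps Heps) as [dl Hdl].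
assert (Hm : 0 < Rmin dl del) by (apply Rmin_pos; [apply cond_pos|auto]).
exists (mkposreal _ Hm). intros h Hh0 Hh. simpl in Hh.
rewrite (Heq (x+h)), (Heq x). apply Hdl; auto. eapply Rlt_le_trans; [exact Hh|apply Rmin_l].
replace (x - x) with 0 by ring. rewrite Rabs_R0; auto.
replace (x + h - x) with h by ring. eapply Rlt_le_trans; [exact Hh|apply Rmin_r]. Qed.

Lemma der_ext f g x D D' : (forall h, f h = g h) -> D = D' -> derivable_pt_lim g x D -> derivable_pt_lim f x D'.
Proof. intros H HD Hg. subst. apply (der_local f g); auto. exists 1; split; [lra|auto]. Qed.

Lemma dconst c x : derivable_pt_lim (fun _ => c) x 0.
Proof. exact (derivable_pt_lim_const c x). Qed.
Lemma daff y h0 c x : derivable_pt_lim (fun h => y + (h - h0) * c) x c.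
Proof. intros eps Heps. exists (mkposreal _ Heps). intros h Hh _.
replace ((y + (x + h - h0) * c - (y + (x - h0) * c)) / h - c) with 0 by (field; auto).
rewrite Rabs_R0; auto. Qed.
Lemma dplus f g x l1 l2 : derivable_pt_lim f x l1 -> derivable_pt_lim g x l2 ->
  derivable_pt_lim (fun h => f h + g h) x (l1 + l2).
Proof. intros; exact (derivable_pt_lim_plus f g x l1 l2 H H0). Qed.
Lemma dscal f a x l : derivable_pt_lim f x l -> derivable_pt_lim (fun h => a * f h) x (a * l).
Proof. intros; exact (derivable_pt_lim_scal f a x l H). Qed.

Lemma der_sumR n (F : R -> nat -> R) D x :
  (forall l, (l<n)%nat -> derivable_pt_lim (fun h => F h l) x (D l)) ->
  derivable_pt_lim (fun h => sumR n (F h)) x (sumR n D).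
Proof. induction n; simpl; intros H. apply dconst.
apply dplus. apply IHn; intros; apply H; lia. apply H; lia. Qed.

Lemma der_rpow_aff y h0 c b : (0 < y \/ c = 0) ->
  derivable_pt_lim (fun h => rpow (y + (h - h0) * c) b) h0 (b * rpow y (b - 1) * c).
Proof. intros [Hy|Hc].
- set (del := y / (Rabs c + 1)). assert (Hc1 : 0 < Rabs c + 1) by (assert (0 <= Rabs c) by apply Rabs_pos; lra).
  assert (Hdel : 0 < del) by (unfold del; apply Rdiv_lt_0_compat; auto).
  apply (der_local _ (fun h => Rpower (y + (h - h0) * c) b)).
  2:{ exists del; split; auto. intros h Hh. apply rpow_pos_eq.
      assert (Rabs ((h - h0) * c) < y).
      { rewrite Rabs_mult. assert (0 <= Rabs c) by apply Rabs_pos.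
        apply Rle_lt_trans with (del * Rabs c). apply Rmult_le_compat_r; lra.
        unfold del. apply (Rmult_lt_reg_r (Rabs c + 1)); auto.
        replace (y / (Rabs c + 1) * Rabs c * (Rabs c + 1)) with (y * Rabs c) by (field; lra). nra. }
      apply Rabs_def2 in H. lra. }
  rewrite (rpow_pos_eq y) by auto.
  assert (Hy' : 0 < y + (h0 - h0) * c) by (replace (y + (h0 - h0) * c) with y by ring; auto).
  assert (Hc := derivable_pt_lim_comp (fun h => y + (h - h0) * c) (fun z => Rpower z b) h0 c (b * Rpower (y + (h0 - h0) * c) (b - 1))
     (daff y h0 c h0) (derivable_pt_lim_power _ b Hy')).
  replace (y + (h0 - h0) * c) with y in Hc by ring. exact Hc.
- subst. apply (der_ext _ (fun _ => rpow y b) _ 0). intros; f_equal; ring. ring. apply dconst.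
Qed.

Definition Sx d (x : nat -> R) (u : mat) l := sumR d (fun m => u l m * x m).

Lemma S_upd d x u a b h l : (b < d)%nat ->
  Sx d x (upd u a b h) l = Sx d x u l + (h - u a b) * (if Nat.eqb l a then x b else 0).
Proof. intros Hb. unfold Sx, upd.
rewrite (sumR_ext d _ (fun m => u l m * x m + (if Nat.eqb m b then (if Nat.eqb l a then (h - u a b) * x m else 0) else 0))).
2:{ intros m Hm. destruct (Nat.eqb_spec l a), (Nat.eqb_spec m b); subst; simpl; ring. }
rewrite sumR_plus, sumR_delta. destruct (Nat.ltb_spec b d); [|lia].
destruct (Nat.eqb_spec l a); ring. Qed.

Lemma pdw_f n1 d alpha x r w u s t :
  pdw s t (fnet n1 d alpha x r) w u = if Nat.eqb s r && Nat.ltb t n1 then rpow (Sx d x u t) (alpha t) else 0.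
Proof. unfold pdw. apply eps_der. unfold fnet.
apply (der_ext _ (fun h => sumR n1 (fun l => upd w s t h r l * rpow (Sx d x u l) (alpha l))) _
  (sumR n1 (fun l => if Nat.eqb r s && Nat.eqb l t then rpow (Sx d x u l) (alpha l) else 0))).
- intros; auto.
- destruct (Nat.eqb_spec s r); simpl.
  + subst. rewrite Nat.eqb_refl. simpl. apply sumR_delta.
  + destruct (Nat.eqb_spec r s); [congruence|]. simpl. apply sumR_0.
- apply der_sumR. intros l Hl. unfold upd.
  destruct (Nat.eqb r s && Nat.eqb l t).
  + apply (der_ext _ (fun h => 0 + (h - 0) * rpow (Sx d x u l) (alpha l)) _ (rpow (Sx d x u l) (alpha l))); [intros; ring|auto|apply daff].
  + apply dconst.
Qed.

Lemma pdu_f n1 d alpha x r w u a b : (a < n1)%nat -> (b < d)%nat -> (0 < Sx d x u a \/ x b = 0) ->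
  pdu a b (fnet n1 d alpha x r) w u = w r a * (alpha a * rpow (Sx d x u a) (alpha a - 1) * x b).
Proof. intros Ha Hb Hc. unfold pdu. apply eps_der. unfold fnet.
apply (der_ext _ (fun h => sumR n1 (fun l => w r l * rpow (Sx d x u l + (h - u a b) * (if Nat.eqb l a then x b else 0)) (alpha l))) _
  (sumR n1 (fun l => w r l * (alpha l * rpow (Sx d x u l) (alpha l - 1) * (if Nat.eqb l a then x b else 0))))).
- intros h. apply sumR_ext; intros l Hl. fold (Sx d x (upd u a b h) l). rewrite S_upd by auto. auto.
- rewrite (sumR_ext n1 _ (fun l => if Nat.eqb l a then w r l * (alpha l * rpow (Sx d x u l) (alpha l - 1) * x b) else 0)).
  rewrite sumR_delta. destruct (Nat.ltb_spec a n1); [auto|lia].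
  intros l Hl. destruct (Nat.eqb_spec l a); ring.
- apply der_sumR. intros l Hl. apply dscal. apply der_rpow_aff.
  destruct (Nat.eqb_spec l a); [subst; auto|right; auto].
Qed.

Lemma S_pos d x u a b : (forall m, (m<d)%nat -> 0 <= x m) -> (forall m, (m<d)%nat -> 0 < u a m) ->
  (b < d)%nat -> 0 < x b -> 0 < Sx d x u a.
Proof. intros Hx Hu Hb Hxb. unfold Sx.
apply Rlt_le_trans with (u a b * x b). apply Rmult_lt_0_compat; auto.
apply (sumR_ge_term d (fun m => u a m * x m)); auto. intros k Hk. apply Rmult_le_pos; [left|]; auto. Qed.

Lemma pdw_der g w u s t D : derivable_pt_lim (fun h => g (upd w s t h) u) (w s t) D -> pdw s t g w u = D.
Proof. intros; unfold pdw; apply eps_der; auto. Qed.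
Lemma pdu_der g w u a b D : derivable_pt_lim (fun h => g w (upd u a b h)) (u a b) D -> pdu a b g w u = D.
Proof. intros; unfold pdu; apply eps_der; auto. Qed.

Lemma pos_near y h0 c : 0 < y -> exists del, 0 < del /\ forall h, Rabs (h - h0) < del -> 0 < y + (h - h0) * c.
Proof. intros Hy. set (del := y / (Rabs c + 1)). assert (Hc1 : 0 < Rabs c + 1) by (assert (0 <= Rabs c) by apply Rabs_pos; lra).
exists del; split. unfold del; apply Rdiv_lt_0_compat; auto.
intros h Hh. assert (Rabs ((h - h0) * c) < y).
{ rewrite Rabs_mult. assert (0 <= Rabs c) by apply Rabs_pos.
  apply Rle_lt_trans with (del * Rabs c). apply Rmult_le_compat_r; lra.
  unfold del. apply (Rmult_lt_reg_r (Rabs c + 1)); auto.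
  replace (y / (Rabs c + 1) * Rabs c * (Rabs c + 1)) with (y * Rabs c) by (field; lra). nra. }
apply Rabs_def2 in H. lra. Qed.

Lemma rpow_m1 y b : 0 <= y -> rpow y (b - 1) * y = rpow y b.
Proof. intros. rewrite <- (rpow_1 y) at 2 by auto. rewrite <- rpow_plus by auto. f_equal; ring. Qed.

Lemma dsum_delta n1 d (u : mat) (x : nat -> R) a0 K : (a0 < n1)%nat ->
  sumR n1 (fun a => sumR d (fun b => u a b * (K * (if Nat.eqb a0 a then x b else 0)))) = K * Sx d x u a0.
Proof. intros H. rewrite (sumR_ext n1 _ (fun a => if Nat.eqb a a0 then K * Sx d x u a else 0)).
rewrite sumR_delta. destruct (Nat.ltb_spec a0 n1); [auto|lia].
intros a Ha. rewrite Nat.eqb_sym. destruct (Nat.eqb a a0).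
unfold Sx. rewrite <- sumR_scal. apply sumR_ext; intros; ring.
rewrite (sumR_ext d _ (fun _ => 0)) by (intros; ring). apply sumR_0. Qed.

Theorem mainTheorem11
  (n K n1 d : nat) (X : nat -> nat -> R) (alpha : nat -> R)
  (pw pu rhow rhou : R)
  (hX : forall i m, (i < n)%nat -> (m < d)%nat -> 0 <= X i m)
  (halpha : forall l, (l < n1)%nat -> 1 <= alpha l)
  (hpw : 1 < pw) (hpu : 1 < pu) (hrhow : 0 < rhow) (hrhou : 0 < rhou) :
  let rhox := maxR n (fun i => lpnorm_vec (conj pu) d (X i)) in
  let Cw := rhow * Psi n1 alpha (fun _ => 1) (conj pw) pu (rhou * rhox) in
  let Cu := rhow * Psi n1 alpha alpha (conj pw) pu (rhou * rhox) in
  forall i w u r s q b' a' b'',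
  (i < n)%nat -> Bpp K n1 d pw pu rhow rhou w u ->
  (r < K)%nat -> (s < K)%nat -> (q < K)%nat ->
  (b' < n1)%nat -> (a' < n1)%nat -> (b'' < d)%nat ->
  let f := fnet n1 d alpha (X i) r in
  sumR n1 (fun t => w s t * pdw s t f w u) <= Cw /\
  sumR n1 (fun a => sumR d (fun b => u a b * pdu a b f w u)) <= Cu /\
  sumR n1 (fun t => w s t * pdw s t (pdw q b' f) w u) = 0 /\
  sumR n1 (fun a => sumR d (fun b => u a b * pdu a b (pdw q b' f) w u))
    <= linf n1 alpha * pdw q b' f w u /\
  sumR n1 (fun t => w s t * pdw s t (pdu a' b'' f) w u) <= pdu a' b'' f w u /\
  sumR n1 (fun a => sumR d (fun b => u a b * pdu a b (pdu a' b'' f) w u))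
    <= (linf n1 alpha - 1) * pdu a' b'' f w u.
Proof.
intros rhox Cw Cu i w u r s q b' a' b'' Hi HB Hr Hs Hq Hb' Ha' Hb'' f.
destruct HB as [Hw [Hu [Hnu Hnw]]].
set (x := X i). assert (Hx : forall m, (m<d)%nat -> 0 <= x m) by (intros; apply hX; auto).
assert (Hnx : lpnorm_vec (conj pu) d x <= rhox) by (apply (maxR_ge n (fun i => lpnorm_vec (conj pu) d (X i))); auto).
assert (Hlinf : forall l, (l<n1)%nat -> alpha l <= linf n1 alpha).
{ intros l Hl. unfold linf. rewrite <- (Rabs_pos_eq (alpha l)) by (assert (1 <= alpha l) by auto; lra).
  apply (maxR_ge n1 (fun l => Rabs (alpha l))); auto. }
assert (Hcond : forall a b, (a<n1)%nat -> (b<d)%nat -> 0 < Sx d x u a \/ x b = 0).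
{ intros a b Ha Hb. destruct (Hx b Hb) as [H|H]; [left|right; auto]. apply (S_pos d x u a b); auto. }
unfold f. fold x.
split; [|split; [|split; [|split; [|split]]]].
-
  rewrite (sumR_ext n1 _ (fun t => if Nat.eqb s r then w r t * (1 * rpow (Sx d x u t) (alpha t)) else 0)).
  2:{ intros t Ht. rewrite pdw_f. destruct (Nat.eqb_spec s r); simpl. subst. destruct (Nat.ltb_spec t n1); [ring|lia]. ring. }
  destruct (Nat.eqb s r).
  + unfold Cw. apply (main_ineq n1 d alpha x pw pu rhow rhou rhox (w r) u (fun _ => 1)); auto.
    intros; lra.
  + rewrite sumR_0. unfold Cw. apply Rmult_le_pos; [lra|]. unfold Psi. apply rpow_ge0.
-
  rewrite (sumR_ext n1 _ (fun a => w r a * (alpha a * rpow (Sx d x u a) (alpha a)))).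
  + unfold Cu. apply (main_ineq n1 d alpha x pw pu rhow rhou rhox (w r) u alpha); auto.
    intros l Hl; assert (1 <= alpha l) by auto; lra.
  + intros a Ha. rewrite (sumR_ext d _ (fun b => (w r a * alpha a * rpow (Sx d x u a) (alpha a - 1)) * (u a b * x b))).
    2:{ intros b Hb. rewrite pdu_f by auto. ring. }
    rewrite sumR_scal. fold (Sx d x u a). rewrite Rmult_assoc, rpow_m1. ring.
    unfold Sx; apply sumR_ge0; intros m Hm. assert (0 < u a m) by auto. assert (0 <= x m) by auto. nra.
-
  rewrite (sumR_ext n1 _ (fun _ => 0)). apply sumR_0.
  intros t Ht. rewrite (pdw_der _ w u s t 0). ring.
  apply (der_ext _ (fun _ => if Nat.eqb q r && Nat.ltb b' n1 then rpow (Sx d x u b') (alpha b') else 0) _ 0).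
  intros h; apply pdw_f. auto. apply dconst.
-
  rewrite pdw_f. destruct (Nat.eqb q r) eqn:Eq.
  2:{ simpl. rewrite (sumR_ext n1 _ (fun _ => 0)). rewrite sumR_0; lra.
      intros a Ha. rewrite (sumR_ext d _ (fun _ => 0)). apply sumR_0.
      intros b Hb. rewrite (pdu_der _ w u a b 0). ring.
      apply (der_ext _ (fun _ => 0) _ 0). intros h; rewrite pdw_f, Eq; auto. auto. apply dconst. }
  destruct (Nat.ltb_spec b' n1); [|lia]. simpl.
  rewrite (sumR_ext n1 _ (fun a => sumR d (fun b => u a b * (alpha b' * rpow (Sx d x u b') (alpha b' - 1) * (if Nat.eqb b' a then x b else 0))))).
  2:{ intros a Ha. apply sumR_ext; intros b Hb. f_equal. apply pdu_der.
      apply (der_ext _ (fun h => rpow (Sx d x u b' + (h - u a b) * (if Nat.eqb b' a then x b else 0)) (alpha b')) _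
         (alpha b' * rpow (Sx d x u b') (alpha b' - 1) * (if Nat.eqb b' a then x b else 0))).
      intros h. rewrite pdw_f, Eq. destruct (Nat.ltb_spec b' n1); [|lia]. simpl. rewrite S_upd by auto. auto. auto.
      apply der_rpow_aff. destruct (Nat.eqb_spec b' a); [subst; apply Hcond; auto|right; auto]. }
  rewrite dsum_delta by auto. rewrite Rmult_assoc, rpow_m1.
  apply Rmult_le_compat_r; [apply rpow_ge0|auto].
  unfold Sx; apply sumR_ge0; intros m Hm. assert (0 < u b' m) by auto. assert (0 <= x m) by auto. nra.
-
  set (Kc := alpha a' * rpow (Sx d x u a') (alpha a' - 1) * x b'').
  assert (HK : 0 <= Kc). { unfold Kc. assert (1 <= alpha a') by auto. assert (0 <= rpow (Sx d x u a') (alpha a' - 1)) by apply rpow_ge0.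
    assert (0 <= x b'') by auto. apply Rmult_le_pos; [apply Rmult_le_pos|]; lra. }
  rewrite pdu_f by auto. fold Kc.
  rewrite (sumR_ext n1 _ (fun t => if Nat.eqb t a' then (if Nat.eqb r s then w s t * Kc else 0) else 0)).
  2:{ intros t Ht. rewrite (pdw_der _ w u s t (if Nat.eqb r s && Nat.eqb a' t then Kc else 0)).
      destruct (Nat.eqb_spec t a'), (Nat.eqb_spec a' t), (Nat.eqb r s); simpl; try lia; ring.
      apply (der_ext _ (fun h => upd w s t h r a' * Kc) _ (if Nat.eqb r s && Nat.eqb a' t then Kc else 0)).
      intros h. rewrite pdu_f by auto. fold Kc. auto. auto.
      unfold upd. destruct (Nat.eqb r s && Nat.eqb a' t).
      apply (der_ext _ (fun h => 0 + (h - 0) * Kc) _ Kc); [intros; ring|auto|apply daff].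
      apply dconst. }
  rewrite sumR_delta. destruct (Nat.ltb_spec a' n1); [|lia].
  destruct (Nat.eqb_spec r s). subst; lra. assert (0 < w r a') by auto. nra.
-
  destruct (Hx b'' Hb'') as [Hxp|Hx0].
  + assert (HS : 0 < Sx d x u a') by (apply (S_pos d x u a' b''); auto).
    set (W := w r a' * alpha a' * x b'').
    rewrite (sumR_ext n1 _ (fun a => sumR d (fun b => u a b * (W * ((alpha a' - 1) * rpow (Sx d x u a') (alpha a' - 1 - 1)) * (if Nat.eqb a' a then x b else 0))))).
    2:{ intros a Ha. apply sumR_ext; intros b Hb. f_equal. apply pdu_der.
        apply (der_local _ (fun h => W * rpow (Sx d x u a' + (h - u a b) * (if Nat.eqb a' a then x b else 0)) (alpha a' - 1))).
        - apply (der_ext _ (fun h => W * rpow (Sx d x u a' + (h - u a b) * (if Nat.eqb a' a then x b else 0)) (alpha a' - 1)) _ (W * ((alpha a' - 1) * rpow (Sx d x u a') (alpha a' - 1 - 1) * (if Nat.eqb a' a then x b else 0)))).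
          intros; auto. ring. apply dscal. apply der_rpow_aff. auto.
        - destruct (pos_near (Sx d x u a') (u a b) (if Nat.eqb a' a then x b else 0) HS) as [del [Hdel Hp]].
          exists del; split; auto. intros h Hh. rewrite pdu_f; auto.
          rewrite S_upd by auto. unfold W. ring.
          rewrite S_upd by auto. left; auto. }
    rewrite dsum_delta by auto. rewrite pdu_f by auto.
    rewrite Rmult_assoc, (Rmult_assoc _ (rpow _ _)), rpow_m1 by lra.
    assert (0 < w r a') by auto. assert (1 <= alpha a') by auto. assert (alpha a' <= linf n1 alpha) by auto.
    assert (0 <= rpow (Sx d x u a') (alpha a' - 1)) by apply rpow_ge0.
    unfold W.
    assert (0 <= w r a' * alpha a' * x b'' * rpow (Sx d x u a') (alpha a' - 1)).
    { apply Rmult_le_pos; [|auto]. apply Rmult_le_pos; [|lra]. apply Rmult_le_pos; lra. }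
    replace (w r a' * (alpha a' * rpow (Sx d x u a') (alpha a' - 1) * x b''))
      with (w r a' * alpha a' * x b'' * rpow (Sx d x u a') (alpha a' - 1)) by ring.
    replace (w r a' * alpha a' * x b'' * ((alpha a' - 1) * rpow (Sx d x u a') (alpha a' - 1)))
      with ((alpha a' - 1) * (w r a' * alpha a' * x b'' * rpow (Sx d x u a') (alpha a' - 1))) by ring.
    apply Rmult_le_compat_r; lra.
  + rewrite (sumR_ext n1 _ (fun _ => 0)).
    * rewrite sumR_0, pdu_f by auto. rewrite <- Hx0. lra.
    * intros a Ha. rewrite (sumR_ext d _ (fun _ => 0)). apply sumR_0.
      intros b Hb. rewrite (pdu_der _ w u a b 0). ring.
      apply (der_ext _ (fun _ => 0) _ 0). intros h; rewrite pdu_f by auto. rewrite <- Hx0; ring. auto. apply dconst.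
Qed.
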